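(* Let $d\ge1$ and let $G$ be obtained from an $\mathcal{R}_d$-independent graph by adding at most $2$ edges. Then $G$ is $\mathcal{R}_{d+1}$-independent.
   Context: For a graph $G=(V,E)$ and a generic $p:V\to\mathbb{R}^d$ (coordinates algebraically independent over $\mathbb{Q}$), the rigidity matrix has a row for each $uv\in E$ with $p(u)-p(v)$ in the $d$ columns of $u$, $p(v)-p(u)$ in those of $v$, zeros elsewhere; $\mathcal{R}_d$ is its row matroid, with rank $r_d$. A graph with edge set $F$ is $\mathcal{R}_d$-independent if $r_d(F)=|F|$. Graphs are simple; added edges join existing non-adjacent vertices. *)

(* Defs.v *)
From HB Require Import structures.
From mathcomp Require Import all_boot all_order all_algebra.
From mathcomp Require Import mpoly.
From mathcomp Require Import reals.
Set Implicit Arguments. Unset Strict Implicit. Unset Printing Implicit Defensive.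
Import Order.TTheory GRing.Theory Num.Theory.
Local Open Scope ring_scope.

(* A realisation p : V -> R^d is generic when its coordinates
   (p v) k, (v,k) in V * 'I_d, are algebraically independent over Q:
   no nonzero rational polynomial in #|V|*d variables vanishes at them. *)
Definition generic (R : realType) (d : nat) (V : finType) (p : V -> 'rV[R]_d) : Prop :=
  forall q : {mpoly rat[#|{: V * 'I_d}|]}, q != 0 ->
    mmap (@ratr R) (fun i => let: (v, k) := enum_val i in p v 0 k) q != 0.

(* Row of the rigidity matrix for the edge e = {u,v}: in the block of w,
   it is \sum_(x in e) (p w - p x), i.e. p u - p v for w = u,
   p v - p u for w = v, and 0 otherwise. *)
Definition rig_row (R : realType) (d : nat) (V : finType) (p : V -> 'rV[R]_d)
  (e : {set V}) (w : V) : 'rV[R]_d :=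
  if w \in e then \sum_(x in e) (p w - p x) else 0.

Definition Rd_indep (R : realType) (d : nat) (V : finType) (F : {set {set V}}) : Prop :=
  forall p : V -> 'rV[R]_d, generic p ->
    forall c : {set V} -> R,
      (forall w : V, \sum_(e in F) c e *: rig_row p e w = 0) ->
      forall e, e \in F -> c e = 0.

(* Main.v *)
Require Import Defs.
From Stdlib Require Import Classical.
From HB Require Import structures.
From mathcomp Require Import all_boot all_order all_algebra.
From mathcomp Require Import mpoly.
From mathcomp Require Import reals.
Set Implicit Arguments. Unset Strict Implicit. Unset Printing Implicit Defensive.
Import Order.TTheory GRing.Theory Num.Theory.
Local Open Scope ring_scope.
Section Comb.
Variables (R : realType) (V : finType).

Definition rs (y : V -> R) (e : {set V}) (w : V) : R :=
  if w \in e then \sum_(x in e) (y w - y x) else 0.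
Definition sst (E : {set {set V}}) (c : {set V} -> R) (y : V -> R) :=
  forall w, \sum_(e in E) c e * rs y e w = 0.
Definition dl (a : V) : V -> R := fun x => (x == a)%:R.
Definition van (E : {set {set V}}) (c : {set V} -> R) (a : V) :=
  forall e, e \in E -> a \in e -> c e = 0.

Lemma rs_add y1 y2 e w : rs (fun x => y1 x + y2 x) e w = rs y1 e w + rs y2 e w.
Proof.
rewrite /rs; case: ifP => _; last by rewrite addr0.
by rewrite -big_split; apply: eq_bigr => x _; rewrite opprD addrACA.
Qed.

Lemma sum_dl (e : {set V}) a : \sum_(x in e) dl a x = (a \in e)%:R.
Proof.
case: (boolP (a \in e)) => ha.
  rewrite (bigD1 a) //= /dl eqxx big1 ?addr0 // => x /andP[_ /negbTE ->] //.
by rewrite big1 // => x hx; rewrite /dl; case: eqP => // ex; move: ha; rewrite -ex hx.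
Qed.

Lemma rs_dl a e w : w != a -> rs (dl a) e w = - ((w \in e) && (a \in e))%:R.
Proof.
move=> hw; rewrite /rs; case: ifP => _ /=; last by rewrite oppr0.
rewrite sumrB sum_dl big1 ?sub0r // => x _; by rewrite /dl (negbTE hw).
Qed.

Lemma sst_dl_at (E : {set {set V}}) (c : {set V} -> R) a w : w != a ->
  \sum_(e in E) c e * rs (dl a) e w = - \sum_(e in E | (w \in e) && (a \in e)) c e.
Proof.
move=> hw; rewrite big_mkcondr /= -sumrN; apply: eq_bigr => e _.
rewrite rs_dl //; case: ifP => _ /=; by rewrite ?mulrN ?mulr1 ?mulr0 ?oppr0.
Qed.

Lemma pair_eq (e : {set V}) a b : #|e| = 2%N -> a \in e -> b \in e -> a != b -> e = [set a; b].
Proof.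
move=> he ha hb hab; apply/eqP; rewrite eq_sym eqEcard; apply/andP; split.
  by apply/subsetP => x; rewrite !inE => /orP[/eqP->|/eqP->].
by rewrite cards2 hab he.
Qed.

Lemma sum_pair (E : {set {set V}}) (c : {set V} -> R) f a b : (forall e, e \in E -> #|e| = 2%N) -> f \in E ->
  a \in f -> b \in f -> a != b ->
  \sum_(e in E | (b \in e) && (a \in e)) c e = c f.
Proof.
move=> HE hf ha hb hab; rewrite (big_pred1 f) // => e /=.
apply/idP/eqP; last by move->; rewrite hf ha hb.
case/and3P => he hbe hae.
by rewrite (pair_eq (HE e he) hae hbe hab) (pair_eq (HE f hf) ha hb hab).
Qed.

Lemma sum_zero (E : {set {set V}}) (c : {set V} -> R) (P : pred {set V}) : (forall e, e \in E -> P e -> c e = 0) ->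
  \sum_(e in E | P e) c e = 0.
Proof. by move=> H; apply: big1 => e /andP[he hp]; apply: H. Qed.

Lemma sst_dl_van (E : {set {set V}}) (c : {set V} -> R) a : (forall e, e \in E -> #|e| = 2%N) -> sst E c (dl a) -> van E c a.
Proof.
move=> HE H e he ha.
have : #|e :\ a| = 1%N by move: (HE e he); rewrite (cardsD1 a) ha => -[].
move/eqP/cards1P => [w ew].
have hw : w \in e :\ a by rewrite ew set11.
move: hw; rewrite !inE => /andP[wa we].
have := H w; rewrite sst_dl_at // (sum_pair c (HE) he ha we) 1?eq_sym //.
by move/eqP; rewrite oppr_eq0 => /eqP.
Qed.

Lemma sst_dl2 (E : {set {set V}}) (c : {set V} -> R) a a' w : w != a -> w != a' ->
  \sum_(e in E) c e * rs (fun x => dl a x + dl a' x) e w =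
  - \sum_(e in E | (w \in e) && (a \in e)) c e - \sum_(e in E | (w \in e) && (a' \in e)) c e.
Proof.
move=> h1 h2; rewrite -!sst_dl_at // -big_split /=; apply: eq_bigr => e _.
by rewrite rs_add mulrDr.
Qed.

Lemma choose_z (E : {set {set V}}) (St : ({set V} -> R) -> Prop) f1 f2 :
  (forall e, e \in E -> #|e| = 2%N) -> f1 \in E -> f2 \in E ->
  (forall c1 c2 (a : R), St c1 -> St c2 -> St (fun e => c1 e - a * c2 e)) ->
  (forall c, St c -> c f1 = 0 -> c f2 = 0 -> forall e, e \in E -> c e = 0) ->
  exists z : V -> R, forall c, St c -> sst E c z -> forall e, e \in E -> c e = 0.
Proof.
move=> HE h1 h2 Hlin K.
have /cards2P [a [b [ab f1E]]] : #|f1| == 2%N by rewrite HE.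
have /cards2P [a' [b' [ab' f2E]]] : #|f2| == 2%N by rewrite HE.
have ha : a \in f1 by rewrite f1E set21.
have hb : b \in f1 by rewrite f1E set22.
have ha' : a' \in f2 by rewrite f2E set21.
have hb' : b' \in f2 by rewrite f2E set22.
have Hd : forall v, v \in f1 -> (forall c, St c -> van E c v -> c f2 = 0) ->
    exists z : V -> R, forall c, St c -> sst E c z -> forall e, e \in E -> c e = 0.
  move=> v hv Hv; exists (dl v) => c hc hs; have hvan := sst_dl_van HE hs.
  by apply: K => //; [apply: hvan | apply: Hv].
have Hd' : forall v, v \in f2 -> (forall c, St c -> van E c v -> c f1 = 0) ->
    exists z : V -> R, forall c, St c -> sst E c z -> forall e, e \in E -> c e = 0.
  move=> v hv Hv; exists (dl v) => c hc hs; have hvan := sst_dl_van HE hs.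
  by apply: K => //; [apply: Hv | apply: hvan].
have wit : forall v (f : {set V}), ~ (forall c, St c -> van E c v -> c f = 0) ->
    exists c, [/\ St c, van E c v & c f <> 0].
  move=> v f nH; apply: NNPP => H; apply: nH => c sc vc; apply: NNPP => nz.
  by apply: H; exists c.
case: (classic (forall c, St c -> van E c a -> c f2 = 0)) => [/(Hd a ha)//|/wit [c2 [s2 v2 n2]]].
case: (classic (forall c, St c -> van E c b -> c f2 = 0)) => [/(Hd b hb)//|/wit [c2' [s2' v2' n2']]].
case: (classic (forall c, St c -> van E c a' -> c f1 = 0)) => [/(Hd' a' ha')//|/wit [c1 [s1 v1 n1]]].
case: (classic (forall c, St c -> van E c b' -> c f1 = 0)) => [/(Hd' b' hb')//|/wit [c1' [s1' v1' n1']]].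
have prop : forall c c', St c -> St c' -> forall g1 g2, (g1 = f1 /\ g2 = f2 \/ g1 = f2 /\ g2 = f1) ->
    c g1 = 0 -> c' g1 = 0 -> c' g2 <> 0 -> forall e, e \in E -> c e = (c g2 / c' g2) * c' e.
  move=> c c' sc sc' g1 g2 hg z1 z1' nz e he.
  apply/eqP; rewrite -subr_eq0; apply/eqP.
  have hz1 : c g1 - c g2 / c' g2 * c' g1 = 0 by rewrite z1 z1' mulr0 subr0.
  have hz2 : c g2 - c g2 / c' g2 * c' g2 = 0 by rewrite divfK ?subrr //; apply/eqP.
  case: hg => -[e1 e2]; subst g1 g2; apply: (K _ (Hlin _ _ _ sc sc')) => //.
have c2f1 : c2 f1 = 0 by apply: v2.
have c2'f1 : c2' f1 = 0 by apply: v2'.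
have c1f2 : c1 f2 = 0 by apply: v1.
have c1'f2 : c1' f2 = 0 by apply: v1'.
have v2b : van E c2 b.
  move=> e he hbe; rewrite (prop c2 c2' s2 s2' f1 f2 (or_introl (conj erefl erefl))) //.
  by rewrite (v2' e he hbe) mulr0.
have v1b : van E c1 b'.
  move=> e he hbe; rewrite (prop c1 c1' s1 s1' f2 f1 (or_intror (conj erefl erefl))) //.
  by rewrite (v1' e he hbe) mulr0.
have neq : forall x y, van E c1 x -> y \in f1 -> y != x.
  by move=> x y vx hy; apply/eqP => eyx; subst y; apply: n1; apply: vx.
have baa' : b != a' := neq _ _ v1 hb.
have bab' : b != b' := neq _ _ v1b hb.
have aa' : a != a' := neq _ _ v1 ha.
have ab'0 : a != b' := neq _ _ v1b ha.
exists (fun x => dl a x + dl a' x) => c sc hs.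
pose la := c f1 / c1 f1; pose mu := c f2 / c2 f2.
have rep : forall e, e \in E -> c e - la * c1 e - mu * c2 e = 0.
  apply: (K _ (Hlin _ _ _ (Hlin _ _ _ sc s1) s2)).
    by rewrite c2f1 mulr0 subr0 /la divfK ?subrr //; apply/eqP.
  by rewrite c1f2 mulr0 subr0 /mu divfK ?subrr //; apply/eqP.
have zero : forall e, e \in E -> c1 e = 0 -> c2 e = 0 -> c e = 0.
  move=> e he z1 z2; have := rep e he; rewrite z1 z2 !mulr0 !subr0 //.
have cf1 : c f1 = 0.
  have := hs b; rewrite sst_dl2 ?(eq_sym b a) // (sum_pair c HE h1 ha hb ab).
  rewrite sum_zero ?subr0; first by move/eqP; rewrite oppr_eq0 => /eqP.
  by move=> e he /andP[hbe hae]; apply: zero => //; [apply: v1 | apply: v2b].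
have cf2 : c f2 = 0.
  have := hs b'; rewrite sst_dl2 1?eq_sym // (sum_pair c HE h2 ha' hb' ab').
  rewrite sum_zero ?oppr0 ?sub0r; first by move/eqP; rewrite oppr_eq0 => /eqP.
  by move=> e he /andP[hbe hae]; apply: zero => //; [apply: v1b | apply: v2].
exact: K.
Qed.

Lemma mmap_ext (n : nat) (S : ringType) (f : rat -> S) (g1 g2 : 'I_n -> S) (P : {mpoly rat[n]}) :
  g1 =1 g2 -> mmap f g1 P = mmap f g2 P.
Proof.
move=> eg; rewrite /mmap; apply: eq_big_seq => m _; by rewrite (mmap1_eq _ eg).
Qed.

Lemma mmap_comp_mono (n k : nat) (S : comRingType) (f : {rmorphism rat -> S}) (g : 'I_k -> S)
  (h : 'I_n -> {mpoly rat[k]}) (c : rat) (m : 'X_{1..n}) :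
  mmap f g (mmap (@mpolyC k rat) h (c *: 'X_[m])) = mmap f (fun i => mmap f g (h i)) (c *: 'X_[m]).
Proof.
rewrite -!mul_mpolyC !rmorphM /= !mmapC !mmapX /mmap1 rmorph_prod; congr (_ * _).
by apply: eq_bigr => i _; rewrite rmorphXn.
Qed.

Lemma mmap_comp (n k : nat) (S : comRingType) (f : {rmorphism rat -> S}) (g : 'I_k -> S)
  (h : 'I_n -> {mpoly rat[k]}) (P : {mpoly rat[n]}) :
  mmap f g (mmap (@mpolyC k rat) h P) = mmap f (fun i => mmap f g (h i)) P.
Proof.
rewrite (mpolyE P) (raddf_sum (mmap (@mpolyC k rat) h)) (raddf_sum (mmap f g)).
rewrite (raddf_sum (mmap f (fun i => mmap f g (h i)))); apply: eq_bigr => m _.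
exact: mmap_comp_mono.
Qed.

Lemma mmap_idX_mono (n : nat) (c : rat) (m : 'X_{1..n}) :
  mmap (@mpolyC n rat) (fun i => 'X_i) (c *: 'X_[m]) = c *: 'X_[m].
Proof. by rewrite -!mul_mpolyC rmorphM /= mmapC mmapX mmap1_id. Qed.

Lemma mmap_idX (n : nat) (P : {mpoly rat[n]}) :
  mmap (@mpolyC n rat) (fun i => 'X_i) P = P.
Proof.
apply: (eq_trans _ (esym (mpolyE P))).
rewrite {1}(mpolyE P) (raddf_sum (mmap (@mpolyC n rat) _)); apply: eq_bigr => m _.
exact: mmap_idX_mono.
Qed.


Definition ev (m : nat) (P : V -> 'rV[R]_m) : 'I_#|{: V * 'I_m}| -> R :=
  fun i => let: (v, k) := enum_val i in P v 0 k.

Lemma genericE m (P : V -> 'rV[R]_m) :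
  generic P <-> forall q : {mpoly rat[#|{: V * 'I_m}|]}, q != 0 -> mmap (@ratr R) (ev P) q != 0.
Proof. by []. Qed.

Lemma mmapXU (n : nat) (S : comRingType) (f : {rmorphism rat -> S}) (g : 'I_n -> S) i :
  mmap f g 'X_i = g i.
Proof. by rewrite mmapX mmap1U. Qed.

Definition proj m (p : V -> 'rV[R]_m.+1) : V -> 'rV[R]_m :=
  fun v => \row_(k < m) p v 0 (lift ord_max k).

Lemma proj_generic m (p : V -> 'rV[R]_m.+1) : generic p -> generic (proj p).
Proof.
move=> gp Q nzQ.
pose h : 'I_#|{: V * 'I_m}| -> {mpoly rat[#|{: V * 'I_m.+1}|]} :=
  fun i => let: (v, k) := enum_val i in 'X_(enum_rank (v, lift ord_max k)).
pose h' : 'I_#|{: V * 'I_m.+1}| -> {mpoly rat[#|{: V * 'I_m}|]} :=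
  fun j => let: (v, k) := enum_val j in
    match unlift ord_max k with Some k' => 'X_(enum_rank (v, k')) | None => 0 end.
have e1 : mmap (@ratr R) (ev p) (mmap (@mpolyC _ rat) h Q) = mmap (@ratr R) (ev (proj p)) Q.
  rewrite mmap_comp; apply: mmap_ext => i; rewrite /h /ev.
  case E: (enum_val i) => [v k]; rewrite mmapXU enum_rankK /proj mxE //.
have e2 : mmap (@mpolyC _ rat) h' (mmap (@mpolyC _ rat) h Q) = Q.
  rewrite mmap_comp -[RHS]mmap_idX; apply: mmap_ext => i; rewrite /h.
  case E: (enum_val i) => [v k]; rewrite mmapXU /h' enum_rankK liftK -E enum_valK //.
rewrite -e1; apply: gp; apply/eqP => Z; move/eqP: nzQ; apply; rewrite -e2 Z raddf0 //.
Qed.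


Definition stress m (P : V -> 'rV[R]_m) (E : {set {set V}}) (c : {set V} -> R) :=
  forall w, \sum_(e in E) c e *: rig_row P e w = 0.
Definition indep_at m (P : V -> 'rV[R]_m) (E : {set {set V}}) :=
  forall c, stress P E c -> forall e, e \in E -> c e = 0.

Lemma rig_entry m (P : V -> 'rV[R]_m) e w k : rig_row P e w 0 k = rs (fun v => P v 0 k) e w.
Proof.
rewrite /rig_row /rs; case: ifP => _; last by rewrite mxE.
by rewrite summxE; apply: eq_bigr => x _; rewrite !mxE.
Qed.

Lemma stress_entry m (P : V -> 'rV[R]_m) (E : {set {set V}}) (c : {set V} -> R) w k :
  (\sum_(e in E) c e *: rig_row P e w) 0 k = \sum_(e in E) c e * rs (fun v => P v 0 k) e w.
Proof. by rewrite summxE; apply: eq_bigr => e _; rewrite mxE rig_entry. Qed.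

Lemma stressP m (P : V -> 'rV[R]_m) E c : stress P E c <-> forall k, sst E c (fun v => P v 0 k).
Proof.
split => H; first by move=> k w; rewrite -stress_entry H mxE.
by move=> w; apply/rowP => k; rewrite stress_entry mxE; apply: H.
Qed.

Lemma sst_ext E c (y1 y2 : V -> R) : y1 =1 y2 -> sst E c y1 -> sst E c y2.
Proof.
move=> ey H w; rewrite -[RHS](H w); apply: eq_bigr => e _; congr (_ * _).
by rewrite /rs; case: ifP => // _; apply: eq_bigr => x _; rewrite !ey.
Qed.

Definition ext m (q : V -> 'rV[R]_m) (z : V -> R) : V -> 'rV[R]_m.+1 :=
  fun v => \row_j (match unlift ord_max j with Some j' => q v 0 j' | None => z v end).

Lemma stress_ext m (q : V -> 'rV[R]_m) z E c : stress (ext q z) E c -> stress q E c /\ sst E c z.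
Proof.
move/stressP => H; split.
  by apply/stressP => k; apply: (sst_ext _ (H (lift ord_max k))) => v; rewrite mxE liftK.
by apply: (sst_ext _ (H ord_max)) => v; rewrite mxE unlift_none.
Qed.

Lemma stress_lin m (P : V -> 'rV[R]_m) E c1 c2 (a : R) :
  stress P E c1 -> stress P E c2 -> stress P E (fun e => c1 e - a * c2 e).
Proof.
move=> H1 H2 w.
rewrite (eq_bigr (fun e => c1 e *: rig_row P e w - a *: (c2 e *: rig_row P e w))); last first.
  by move=> e _; rewrite scalerBl scalerA.
by rewrite sumrB -scaler_sumr H1 H2 scaler0 subr0.
Qed.

Lemma step3 m (q : V -> 'rV[R]_m) (E0 E : {set {set V}}) :
  (forall e, e \in E -> #|e| = 2%N) -> E0 \subset E -> (#|E :\: E0| <= 2)%N ->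
  indep_at q E0 -> exists z, indep_at (ext q z) E.
Proof.
move=> HE sub card ind.
have K : forall c, stress q E c -> (forall e, e \in E :\: E0 -> c e = 0) ->
    forall e, e \in E -> c e = 0.
  move=> c sc hD e he; case: (boolP (e \in E0)) => h0; last by apply: hD; rewrite inE h0 he.
  apply: (ind c) => // w; rewrite -[RHS](sc w) [in RHS](big_setID E0) /= (setIidPr sub).
  by rewrite [X in _ = _ + X]big1 ?addr0 // => e' he'; rewrite hD // scale0r.
have K2 : forall f1 f2, f1 \in E -> f2 \in E -> (forall e, e \in E :\: E0 -> e = f1 \/ e = f2) ->
    exists z, indep_at (ext q z) E.
  move=> f1 f2 h1 h2 hD.
  have [|z Hz] := @choose_z E (stress q E) f1 f2 HE h1 h2 (@stress_lin m q E).
    by move=> c sc z1 z2; apply: K sc _ => e /hD [->|->].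
  by exists z => c /stress_ext [sc ss]; apply: Hz.
case: (set_0Vmem (E :\: E0)) => [D0 | [f1 hf1]].
  by exists (fun _ => 0) => c /stress_ext [sc _]; apply: K sc _ => e; rewrite D0 inE.
have h1 : f1 \in E by move: hf1; rewrite inE => /andP[].
case: (set_0Vmem ((E :\: E0) :\ f1)) => [D1 | [f2 hf2]].
  apply: (K2 f1 f1 h1 h1) => e he; left; apply/eqP; apply: contraT => ne.
  have : e \in (E :\: E0) :\ f1 by rewrite in_setD1 ne he.
  by rewrite D1 inE.
have h2 : f2 \in E by move: hf2; rewrite !inE => /and3P[].
apply: (K2 f1 f2 h1 h2) => e he.
case: (eqVneq e f1) => [->|ne1]; first by left.
case: (eqVneq e f2) => [->|ne2]; first by right.
have : e \in ((E :\: E0) :\ f1) :\ f2 by rewrite !in_setD1 ne1 ne2 he.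
have : ((E :\: E0) :\ f1) :\ f2 = set0.
  apply/eqP; rewrite -cards_eq0; move: card; rewrite (cardsD1 f1) hf1 (cardsD1 f2) hf2.
  by case: #|_|.
by move->; rewrite inE.
Qed.

Definition RM m (P : V -> 'rV[R]_m) (E : {set {set V}}) : 'M[R]_(#|E|, #|{: V * 'I_m}|) :=
  \matrix_(i, j) (let: (w, k) := enum_val j in rig_row P (enum_val i) w 0 k).

Lemma stress_sum m (P : V -> 'rV[R]_m) (E : {set {set V}}) c w k :
  (\sum_(e in E) c e *: rig_row P e w) 0 k =
  \sum_(i < #|E|) c (enum_val i) * rig_row P (enum_val i) w 0 k.
Proof. by rewrite summxE big_enum_val; apply: eq_bigr => i _; rewrite mxE. Qed.

Lemma indep_det m (P : V -> 'rV[R]_m) (E : {set {set V}}) :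
  indep_at P E <-> \det (RM P E *m (RM P E)^T) != 0.
Proof.
set M := RM P E; split => [ind|hdet].
  apply/negP => /det0P [v nv hv].
  have xx : (v *m M) *m (v *m M)^T = 0 by rewrite trmx_mul mulmxA -(mulmxA v) hv !mul0mx.
  have x0 : forall j, (v *m M) 0 j = 0.
    move: xx; set x := v *m M; clearbody x => xx.
    move=> j; have : (x *m x^T) 0 0 = 0 by rewrite xx mxE.
    rewrite mxE; under eq_bigr do rewrite mxE.
    move/psumr_eq0P => H.
    have := H (fun i _ => ltac:(by rewrite -expr2 sqr_ge0)) j isT.
    by move/eqP; rewrite mulf_eq0 orbb => /eqP.
  pose c e := \sum_(i < #|E| | enum_val i == e) v 0 i.
  have ce : forall i, c (enum_val i) = v 0 i.
    move=> i; rewrite /c (big_pred1 i) // => i' /=.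
    by apply/eqP/eqP => [/enum_val_inj|->].
  have sc : stress P E c.
    move=> w; apply/rowP => k; rewrite stress_sum mxE.
    under eq_bigr do rewrite ce.
    rewrite -[RHS](x0 (enum_rank (w, k))) mxE.
    by apply: eq_bigr => i _; rewrite /M mxE enum_rankK.
  apply/negP: nv; rewrite negbK; apply/eqP/rowP => i; rewrite mxE -ce.
  by apply: ind => //; exact: enum_valP.
move=> c sc e he.
have hu : M *m M^T \in unitmx by rewrite unitmxE unitfE.
pose u := \row_(i < #|E|) c (enum_val i).
have uM : u *m M = 0.
  apply/rowP => j; rewrite !mxE; under eq_bigr do rewrite !mxE.
  case Ej: (enum_val j) => [w k] /=.
  by rewrite -stress_sum (sc w) mxE.
have u0 : u = 0 by rewrite -(mulmxK hu u) mulmxA uM !mul0mx.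
have [i ei] : exists i : 'I_#|E|, enum_val i = e.
  by exists (enum_rank_in he e); rewrite enum_rankK_in.
by have := congr1 (fun r : 'rV_#|E| => r 0 i) u0; rewrite !mxE ei.
Qed.

Definition RMp m (E : {set {set V}}) :
  'M[{mpoly rat[#|{: V * 'I_m}|]}]_(#|E|, #|{: V * 'I_m}|) :=
  \matrix_(i, j) (let: (w, k) := enum_val j in
    if w \in (enum_val i : {set V}) then
      \sum_(x in (enum_val i : {set V})) ('X_(enum_rank (w, k)) - 'X_(enum_rank (x, k)))
    else 0).

Lemma RMp_ev m (P : V -> 'rV[R]_m) (E : {set {set V}}) :
  map_mx (mmap (@ratr R) (ev P)) (RMp m E) = RM P E.
Proof.
apply/matrixP => i j; rewrite !mxE; case: (enum_val j) => w k /=.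
rewrite rig_entry /rs; case: ifP => _; last by rewrite rmorph0.
rewrite rmorph_sum; apply: eq_bigr => x _.
by rewrite rmorphB /= !mmapXU /ev !enum_rankK.
Qed.

Lemma det_ev m (P : V -> 'rV[R]_m) (E : {set {set V}}) :
  \det (RM P E *m (RM P E)^T) =
  mmap (@ratr R) (ev P) (\det (RMp m E *m (RMp m E)^T)).
Proof. by rewrite -det_map_mx map_mxM -map_trmx RMp_ev. Qed.

End Comb.

Theorem corollary4p13 (R : realType) (d : nat) (V : finType)
  (E0 E : {set {set V}}) :
  (1 <= d)%N ->
  (forall e, e \in E -> (#|e| = 2)%N) ->
  E0 \subset E ->
  (#|E :\: E0| <= 2)%N ->
  Rd_indep R d E0 ->
  Rd_indep R d.+1 E.
Proof.
case: d => [//|n] _ HE sub card ind p gp c sc e he.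
have gq := proj_generic gp.
have iq : indep_at (proj p) E0 := ind _ gq.
have [z hz] := step3 HE sub card iq.
have /indep_det hd := hz; rewrite det_ev in hd.
have nz : \det (RMp n.+2 E *m (RMp n.+2 E)^T) != 0.
  by apply: contraNneq hd => ->; rewrite raddf0.
have := (genericE p).1 gp _ nz; rewrite -det_ev => /indep_det H.
exact: H c sc e he.
Qed.
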